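(* Define, for $m,n\ge1$, $\widetilde G_{m,n}(a)=G_{m,n}(a)+\sum_{j=0}^{m-2}G_{n-1,j+2}(a)\,G_{m-j-1,2}(a)$. Then \[ \sum_{m\ge1}\sum_{n\ge1}\widetilde G_{m,n+1}(a)x^my^n=\frac{-yL(a,-x)+xL(a,-y)}{-L(a,-x)+L(a,-y)}\left(\frac{-yL(a,-x)-xL(a,-y)}{xy}-1\right), \] and consequently $\widetilde G_{m,n}(a)=\widetilde G_{n-1,m+1}(a)$ for all $m\ge1$, $n\ge2$.
   Context: Let $L(a,t)=\sum_{n\ge1}\lambda_n(a)t^n\in\mathbb Q[a][[t]]$ be the compositional inverse (in $t$) of $e^{-at}(e^t-1)$, equivalently the unique such series with $e^{L(a,t)}(1-te^{(a-1)L(a,t)})=1$. The generalized Gregory polynomials $G_{m,n}(a)$ are defined by $\sum_{m,n\ge0}G_{m,n}(a)x^my^n=\dfrac{yL(a,-x)^2-xL(a,-y)^2}{-L(a,-x)+L(a,-y)}$. *)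

(* Defs.v *)
(* Formal power series with coefficients in Q[a] = {poly rat}
   are represented by their coefficient functions:
     univariate  series  u : nat -> {poly rat}         (u n = coeff of t^n)
     bivariate   series  A : nat -> nat -> {poly rat}  (A m n = coeff of x^m y^n) *)
From HB Require Import structures.
From mathcomp Require Import all_boot all_order all_algebra.
Set Implicit Arguments. Unset Strict Implicit. Unset Printing Implicit Defensive.
Import Order.TTheory GRing.Theory Num.Theory.
Local Open Scope ring_scope.

Notation Qa := {poly rat}.
Notation ser := (nat -> Qa).
Notation bser := (nat -> nat -> Qa).

(* coefficients of f(a,t) = e^{-at}(e^t - 1) = e^{(1-a)t} - e^{-at}:
   f_k = ((1-a)^k - (-a)^k) / k!  *)
Definition fcoef (k : nat) : Qa :=
  ((k`!%:R : rat)^-1)%:P * ((1 - 'X) ^+ k - (- 'X) ^+ k).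

Definition smul (u v : ser) : ser :=
  fun n => \sum_(i < n.+1) u i * v (n - i)%N.
Definition sone : ser := fun n => (n == 0%N)%:R.
Definition spow (u : ser) (k : nat) : ser := iter k (smul u) sone.

(* lam is the coefficient sequence of L(a,t), the compositional inverse of
   f(a,t) in t:  L has no constant term and f(a, L(a,t)) = t. *)
Definition is_L (lam : ser) : Prop :=
  lam 0%N = 0 /\
  forall n : nat, \sum_(k < n.+1) fcoef k * spow lam k n = (n == 1%N)%:R.

Definition badd (A B : bser) : bser := fun m n => A m n + B m n.
Definition bopp (A : bser) : bser := fun m n => - A m n.
Definition bsub (A B : bser) : bser := fun m n => A m n - B m n.
Definition bmul (A B : bser) : bser :=
  fun m n => \sum_(i < m.+1) \sum_(j < n.+1) A i j * B (m - i)%N (n - j)%N.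
Definition bX : bser := fun m n => ((m == 1%N) && (n == 0%N))%:R.
Definition bY : bser := fun m n => ((m == 0%N) && (n == 1%N))%:R.

(* L(a,-x) and L(a,-y) as bivariate series *)
Definition Lmx (lam : ser) : bser :=
  fun m n => if n == 0%N then (-1) ^+ m * lam m else 0.
Definition Lmy (lam : ser) : bser :=
  fun m n => if m == 0%N then (-1) ^+ n * lam n else 0.

(* G is the generating series of the generalized Gregory polynomials:
   (-L(a,-x) + L(a,-y)) * G(x,y) = y L(a,-x)^2 - x L(a,-y)^2
   (this determines G uniquely since Q[a][[x,y]] is an integral domain and
   -L(a,-x)+L(a,-y) = x - y + ... is nonzero). *)
Definition is_G (lam : ser) (G : bser) : Prop :=
  forall m n : nat,
    bmul (bsub (Lmy lam) (Lmx lam)) G m n =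
    bsub (bmul bY (bmul (Lmx lam) (Lmx lam)))
         (bmul bX (bmul (Lmy lam) (Lmy lam))) m n.

Definition Gtil (G : bser) (m n : nat) : Qa :=
  G m n + \sum_(j < m.-1) G n.-1 (j + 2)%N * G (m - j - 1)%N 2%N.

Definition Sgen (G : bser) : bser :=
  fun m n => if (0 < m)%N && (0 < n)%N then Gtil G m n.+1 else 0.

(* Main.v *)
Require Import Defs.
From HB Require Import structures.
From mathcomp Require Import all_boot all_order all_algebra.
From mathcomp Require Import boolp.
From mathcomp Require Import zify ring.
Set Implicit Arguments. Unset Strict Implicit. Unset Printing Implicit Defensive.
Import Order.TTheory GRing.Theory Num.Theory.
Local Open Scope ring_scope.

Definition fps (R : Type) := nat -> R.
HB.instance Definition _ (R : Type) := gen_eqMixin (fps R).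
HB.instance Definition _ (R : Type) := gen_choiceMixin (fps R).

Section Fps.
Variable R : comNzRingType.
Implicit Types a b c : fps R.

Definition fzero : fps R := fun _ => 0.
Definition fadd a b : fps R := fun n => a n + b n.
Definition fopp a : fps R := fun n => - a n.
Definition fone : fps R := fun n => (n == 0)%:R.
Definition fmul a b : fps R := fun n => \sum_(i < n.+1) a i * b (n - i)%N.

Lemma faddA : associative fadd.
Proof. by move=> a b c; apply: funext => n; rewrite /fadd addrA. Qed.
Lemma faddC : commutative fadd.
Proof. by move=> a b; apply: funext => n; rewrite /fadd addrC. Qed.
Lemma fadd0 : left_id fzero fadd.
Proof. by move=> a; apply: funext => n; rewrite /fadd /fzero add0r. Qed.
Lemma faddN : left_inverse fzero fopp fadd.
Proof. by move=> a; apply: funext => n; rewrite /fadd /fopp /fzero addNr. Qed.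

HB.instance Definition _ := GRing.isZmodule.Build (fps R) faddA faddC fadd0 faddN.

Definition tr (n : nat) a : {poly R} := \poly_(i < n.+1) a i.

Lemma truncM n k a b : (k <= n)%N -> fmul a b k = (tr n a * tr n b)`_k.
Proof.
move=> kn; rewrite coefM /fmul; apply: eq_bigr => i _.
rewrite !coef_poly !ltnS (leq_trans (leq_subr _ _) kn).
by rewrite (leq_trans (ltnSE (ltn_ord i)) kn).
Qed.

Lemma trcoef n k a : (k <= n)%N -> a k = (tr n a)`_k.
Proof. by move=> kn; rewrite coef_poly ltnS kn. Qed.

Lemma fmulA : associative fmul.
Proof.
move=> a b c; apply: funext => n.
transitivity ((tr n a * (tr n b * tr n c))`_n); last first.
  rewrite mulrA coefM; apply: eq_bigr => i _.
  by rewrite -truncM ?(ltnSE (ltn_ord i)) // -trcoef // leq_subr.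
rewrite coefM; apply: eq_bigr => i _.
by rewrite -truncM ?leq_subr // -trcoef // (ltnSE (ltn_ord i)).
Qed.

Lemma fmulC : commutative fmul.
Proof.
move=> a b; apply: funext => n.
by rewrite (truncM _ _ (leqnn n)) mulrC -truncM.
Qed.

Lemma fmul1 : left_id fone fmul.
Proof.
move=> a; apply: funext => n; rewrite /fmul big_ord_recl /= /fone /= mul1r subn0.
by rewrite big1 ?addr0 // => i _; rewrite mul0r.
Qed.

Lemma fmulDl : left_distributive fmul fadd.
Proof.
move=> a b c; apply: funext => n; rewrite /fmul /fadd -big_split /=.
by apply: eq_bigr => i _; rewrite mulrDl.
Qed.

Lemma fone0 : fone != 0.
Proof.
apply/negP => /eqP/(congr1 (fun f => f 0%N)); rewrite /fone /=.
by move/eqP; rewrite oner_eq0.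
Qed.

HB.instance Definition _ := GRing.Zmodule_isComNzRing.Build (fps R)
  fmulA fmulC fmul1 fmulDl fone0.

Lemma fmulE a b n : (a * b) n = \sum_(i < n.+1) a i * b (n - i)%N.
Proof. by []. Qed.
Lemma faddE a b n : (a + b) n = a n + b n.
Proof. by []. Qed.
Lemma foppE a n : (- a) n = - a n.
Proof. by []. Qed.
Lemma fsubE a b n : (a - b) n = a n - b n.
Proof. by []. Qed.
Lemma f0E n : (0 : fps R) n = 0.
Proof. by []. Qed.
Lemma f1E n : (1 : fps R) n = (n == 0)%:R.
Proof. by []. Qed.

Lemma fsumE (I : Type) (r : seq I) (P : pred I) (F : I -> fps R) n :
  (\sum_(i <- r | P i) F i) n = \sum_(i <- r | P i) F i n.
Proof. by apply: (big_morph (fun f : fps R => f n)). Qed.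

Definition fC (c : R) : fps R := fun n => if n == 0%N then c else 0.
Definition fX : fps R := fun n => if n == 1%N then 1 else 0.

Lemma fCmulE (c : R) a n : (fC c * a) n = c * a n.
Proof.
rewrite fmulE big_ord_recl /= subn0 big1 ?addr0 // => i _.
by rewrite /fC /= mul0r.
Qed.
Lemma fmulCE (c : R) a n : (a * fC c) n = a n * c.
Proof. by rewrite mulrC fCmulE mulrC. Qed.

Lemma fXmulE a n : (fX * a) n = if n is k.+1 then a k else 0.
Proof.
case: n => [|n]; rewrite fmulE.
  by rewrite big_ord_recl big_ord0 /fX /= mul0r addr0.
rewrite big_ord_recl big_ord_recl /= big1 ?addr0.
  by rewrite /fX /= mul0r mul1r add0r subSS subn0.
by move=> i _; rewrite /fX /= mul0r.
Qed.

Lemma fCM (c d : R) : fC (c * d) = fC c * fC d.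
Proof. by apply: funext => n; rewrite fCmulE /fC; case: (n == 0%N); rewrite ?mulr0. Qed.
Lemma fCD (c d : R) : fC (c + d) = fC c + fC d.
Proof. by apply: funext => n; rewrite faddE /fC; case: (n == 0%N); rewrite ?addr0. Qed.
Lemma fCN (c : R) : fC (- c) = - fC c.
Proof. by apply: funext => n; rewrite foppE /fC; case: (n == 0%N); rewrite ?oppr0. Qed.
Lemma fC1 : fC 1 = 1.
Proof. by apply: funext => n; rewrite f1E /fC; case: (n == 0%N). Qed.

Lemma fcancel0 a b : (forall c : R, a 0%N * c = 0 -> c = 0) -> a * b = 0 -> b = 0.
Proof.
move=> ha ab; apply: funext => n; rewrite f0E.
elim: n {-2}n (leqnn n) => [|N IH] n.
  rewrite leqn0 => /eqP ->; apply: ha.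
  by have := congr1 (fun f => f 0%N) ab; rewrite fmulE big_ord_recl big_ord0 addr0.
move=> nN; apply: ha.
have := congr1 (fun f => f n) ab; rewrite fmulE big_ord_recl subn0 f0E.
rewrite big1 ?addr0 // => i _; rewrite IH ?mulr0 //.
have := ltn_ord i; rewrite lift0; lia.
Qed.

Lemma fcancel1 a b : a 0%N = 0 -> (forall c : R, a 1%N * c = 0 -> c = 0) ->
  a * b = 0 -> b = 0.
Proof.
move=> a0 ha ab; apply: funext => n; rewrite f0E.
elim: n {-2}n (leqnn n) => [|N IH] n.
  rewrite leqn0 => /eqP ->; apply: ha.
  have := congr1 (fun f => f 1%N) ab; rewrite fmulE big_ord_recl big_ord_recl big_ord0.
  by rewrite /= a0 mul0r add0r addr0.
move=> nN; apply: ha.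
have := congr1 (fun f => f n.+1) ab; rewrite fmulE big_ord_recl big_ord_recl /= a0 mul0r add0r.
rewrite subSS subn0 f0E big1 ?addr0 // => i _.
rewrite IH ?mulr0 //.
have := ltn_ord i; rewrite /bump !leq0n !add1n; lia.
Qed.

End Fps.
Arguments fX {R}.
Arguments fC {R}.
Arguments fone {R}.

Notation R1 := (fps Qa).
Notation R2 := (fps R1).

Lemma bmulE (A B : bser) : bmul A B = ((A : R2) * (B : R2) : R2).
Proof.
apply: funext => m; apply: funext => n.
rewrite fmulE fsumE; apply: eq_bigr => i _; by rewrite fmulE.
Qed.
Lemma bsubE (A B : bser) : bsub A B = ((A : R2) - (B : R2) : R2).
Proof. by []. Qed.
Lemma boppE (A : bser) : bopp A = (- (A : R2) : R2).
Proof. by []. Qed.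

Definition sw (A : R2) : R2 := fun m n => A n m.
Lemma swM (A B : R2) : sw (A * B) = sw A * sw B.
Proof.
apply: funext => m; apply: funext => n.
rewrite /sw fmulE fsumE; under eq_bigr do rewrite fmulE.
rewrite fmulE fsumE; under [RHS]eq_bigr do rewrite fmulE.
by rewrite exchange_big.
Qed.

Lemma swB (A B : R2) : sw (A - B) = sw A - sw B. Proof. by []. Qed.
Lemma swLx lam : sw (Lmx lam) = Lmy lam. Proof. by []. Qed.
Lemma swLy lam : sw (Lmy lam) = Lmx lam. Proof. by []. Qed.
Lemma swX : sw bX = bY.
Proof. by apply: funext => m; apply: funext => n; rewrite /sw /bX /bY andbC. Qed.
Lemma swY : sw bY = bX.
Proof. by apply: funext => m; apply: funext => n; rewrite /sw /bX /bY andbC. Qed.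

Section Gen.
Variable R : comNzRingType.
Lemma fmul0E (a b : fps R) : (a * b) 0%N = a 0%N * b 0%N.
Proof. by rewrite fmulE big_ord_recl big_ord0 addr0. Qed.
Lemma fmul1E (a b : fps R) : (a * b) 1%N = a 0%N * b 1%N + a 1%N * b 0%N.
Proof. by rewrite fmulE !big_ord_recl big_ord0 addr0. Qed.
Lemma fmul2E (a b : fps R) :
  (a * b) 2%N = a 0%N * b 2%N + a 1%N * b 1%N + a 2%N * b 0%N.
Proof. by rewrite fmulE !big_ord_recl big_ord0 addr0 addrA. Qed.
Lemma fC0 : fC (0 : R) = 0.
Proof. by apply: funext => n; rewrite /fC; case: (n == 0%N). Qed.
End Gen.

Lemma sum_shift2 (F g : nat -> Qa) m :
  \sum_(i < m.+3) (if (i < 2)%N then 0 else F i) * g (m.+2 - i)%N =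
  \sum_(j < m) F j.+2 * g (m - j)%N + F m.+2 * g 0%N.
Proof.
rewrite big_ord_recl big_ord_recl big_ord_recr /= !mul0r !add0r; congr (_ + _).
by rewrite (_ : bump 0 (bump 0 m) = m.+2) // subnn.
Qed.

Definition vt (lam : ser) : R1 := fun n => (-1) ^+ n * lam n.
Definition lift1 (a : R1) : R2 := fun m => fC (a m).

Lemma lift1M a b : lift1 (a * b) = lift1 a * lift1 b.
Proof.
apply: funext => m; rewrite /lift1 !fmulE.
rewrite (big_morph (fC (R:=Qa)) (@fCD _) (fC0 _)).
by apply: eq_bigr => i _; rewrite fCM.
Qed.
Lemma lift1D a b : lift1 (a + b) = lift1 a + lift1 b.
Proof. by apply: funext => m; rewrite /lift1 faddE fCD. Qed.
Lemma lift1N a : lift1 (- a) = - lift1 a.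
Proof. by apply: funext => m; rewrite /lift1 foppE fCN. Qed.

Lemma Lmx_lift lam : (Lmx lam : R2) = lift1 (vt lam). Proof. by []. Qed.
Lemma Lmy_C lam : (Lmy lam : R2) = fC (vt lam).
Proof. by apply: funext => m; apply: funext => n; rewrite /Lmy /fC; case: (m == 0%N). Qed.
Lemma bX_fX : (bX : R2) = fX.
Proof.
apply: funext => m; apply: funext => n; rewrite /bX /fX.
by case: (m == 1%N); rewrite ?f1E ?f0E.
Qed.
Lemma bX_lift : (bX : R2) = lift1 fX.
Proof.
apply: funext => m; apply: funext => n; rewrite /bX /lift1 /fX /fC.
by case: (m == 1%N); case: (n == 0%N).
Qed.
Lemma bY_C : (bY : R2) = fC fX.
Proof.
apply: funext => m; apply: funext => n; rewrite /bY /fX /fC.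
by case: (m == 0%N); case: (n == 1%N).
Qed.

Lemma xE (A : R2) m n : ((bX : R2) * A) m n = if m is k.+1 then A k n else 0.
Proof. by rewrite bX_fX fXmulE; case: m. Qed.
Lemma yE (A : R2) m n : ((bY : R2) * A) m n = if n is k.+1 then A m k else 0.
Proof. by rewrite bY_C fCmulE fXmulE. Qed.
Lemma liftE (B : R2) g m n : (B * lift1 g) m n = \sum_(i < m.+1) B i n * g (m - i)%N.
Proof. by rewrite fmulE fsumE; apply: eq_bigr => i _; rewrite /lift1 fmulCE. Qed.

Lemma l1_of (lam : ser) : is_L lam -> lam 1%N = 1.
Proof.
move=> [l0 hL]; have := hL 1%N.
rewrite !big_ord_recl big_ord0 /= /fcoef /spow /= /smul /sone.
rewrite !big_ord_recl big_ord0 /=.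
rewrite /bump /= !mulr0 !addr0 !add0r addn0 mulr1 expr1 factS fact0 muln1.
rewrite (_ : 1 - 'X - - 'X = 1); last by rewrite opprK subrK.
by rewrite mulr1 invr1 mul1r.
Qed.

Theorem lemma6p6 (lam : nat -> {poly rat}) (G : nat -> nat -> {poly rat}) :
  is_L lam -> is_G lam G ->
  (forall m n : nat,
     bmul (bmul (Sgen G) (bsub (Lmy lam) (Lmx lam))) (bmul bX bY) m n =
     bmul (bsub (bmul bX (Lmy lam)) (bmul bY (Lmx lam)))
          (bsub (bsub (bopp (bmul bY (Lmx lam))) (bmul bX (Lmy lam)))
                (bmul bX bY)) m n)
  /\
  (forall m n : nat, (1 <= m)%N -> (2 <= n)%N ->
     Gtil G m n = Gtil G n.-1 m.+1).
Proof.
move=> hLL hG; have l1 := l1_of hLL; case: hLL => l0 _.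
pose vtl := vt lam.
have vt0 : vtl 0%N = 0 by rewrite /vtl /vt l0 mulr0.
have vt1 : vtl 1%N = -1 by rewrite /vtl /vt l1 mulr1 expr1.
have canc : forall c : R1, vtl * c = 0 -> c = 0.
  move=> c; apply: fcancel1 => // d; rewrite vt1 mulN1r => /eqP.
  by rewrite oppr_eq0 => /eqP.
set Lx : R2 := Lmx lam; set Ly : R2 := Lmy lam.
set x : R2 := bX; set y : R2 := bY.
have hG' : (Ly - Lx) * G = y * (Lx * Lx) - x * (Ly * Ly).
  apply: funext => m; apply: funext => n; have := hG m n.
  by rewrite !bmulE !bsubE.
have hGs : (Ly - Lx) * sw G = y * (Lx * Lx) - x * (Ly * Ly).
  have := congr1 sw hG'; rewrite !swM !swB !swM swLx swLy swX swY => e.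
  have -> : (Ly - Lx) * sw G = - ((Lx - Ly) * sw G) by ring.
  by rewrite e -/Lx -/Ly -/x -/y; ring.
have Ly0 : Ly 0%N = vtl by rewrite /Ly Lmy_C.
have LyS : forall k, Ly k.+1 = 0 by move=> k; rewrite /Ly Lmy_C.
have LxE : forall k, Lx k = fC (vtl k) by [].
have Lx0 : Lx 0%N = 0 by rewrite LxE vt0 fC0.
have Lx1 : Lx 1%N = -1 by rewrite LxE vt1 fCN fC1.
have W0 : (Ly - Lx) 0%N = vtl by rewrite fsubE Ly0 Lx0 subr0.
have W1 : (Ly - Lx) 1%N = 1 by rewrite fsubE LyS Lx1 sub0r opprK.
have x0 : forall A : R2, (x * A) 0%N = 0 by move=> A; rewrite /x bX_fX fXmulE.
have xS : forall (A : R2) k, (x * A) k.+1 = A k by move=> A k; rewrite /x bX_fX fXmulE.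
have yk : forall (A : R2) k, (y * A) k = fX * A k by move=> A k; rewrite /y bY_C fCmulE.
have G0 : (G : R2) 0%N = 0.
  apply: canc; have := congr1 (fun f => f 0%N) hG'.
  by rewrite /= fmul0E W0 fsubE yk fmul0E Lx0 mul0r mulr0 x0 subr0.
have Gs0 : sw G 0%N = 0.
  apply: canc; have := congr1 (fun f => f 0%N) hGs.
  by rewrite /= fmul0E W0 fsubE yk fmul0E Lx0 mul0r mulr0 x0 subr0.
have Gs1 : sw G 1%N = - vtl.
  apply/eqP; rewrite -addr_eq0; apply/eqP/canc.
  have := congr1 (fun f => f 1%N) hGs.
  rewrite /= fmul1E W0 W1 Gs0 mulr0 addr0 fsubE yk fmul1E Lx0 Lx1 xS fmul0E Ly0.
  by rewrite !mul0r !mulr0 add0r mulr0 sub0r mulrDr => ->; rewrite addNr.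
have Gs2 : vtl * sw G 2%N = vtl + fX.
  have := congr1 (fun f => f 2%N) hGs.
  rewrite /= fmul2E W0 W1 Gs0 Gs1 mulr0 addr0 fsubE yk fmul2E Lx0 Lx1 xS fmul1E Ly0 LyS.
  rewrite !mul0r !mulr0 !add0r addr0 mulrN1 opprK mulr1 subr0 mul1r => e.
  by rewrite -e addrC subrK.
have G0n : forall n, G 0%N n = 0 by move=> n; rewrite G0.
have Gm0 : forall m, G m 0%N = 0 by move=> m; have := congr1 (fun f => f m) Gs0.
pose g2 := sw G 2%N.
have hG1 : lift1 (sw G 1%N) = - Lx by rewrite Gs1 lift1N.
have hH1 : (fC (sw G 1%N) : R2) = - Ly by rewrite Gs1 fCN /Ly Lmy_C.
have hG2 : Lx * lift1 g2 = Lx + x.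
  by rewrite (_ : Lx = lift1 vtl) // -lift1M Gs2 lift1D /x bX_lift.
have KEY : x * (y * (Sgen G : R2)) =
   x * ((G : R2) - y * lift1 (sw G 1%N)) + y * ((sw G - x * fC (sw G 1%N)) * lift1 g2).
  have BE : forall (i n' : nat), (sw G - x * fC (sw G 1%N)) i n' =
       if (i < 2)%N then 0 else G n' i.
    move=> i n'; rewrite !fsubE /x xE.
    case: i => [|[|i]] /=; rewrite /sw ?Gm0 ?subr0 //.
    by rewrite /fC /= subrr.
  apply: funext => m; apply: funext => n.
  rewrite !faddE.
  case: m => [|[|m]]; case: n => [|[|n]]; rewrite ?xE ?yE ?fsubE ?xE ?yE ?liftE;
    try (under eq_bigr do rewrite BE).
  + by rewrite addr0.
  + by rewrite big_ord_recl big_ord0 /= mul0r !addr0.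
  + by rewrite big_ord_recl big_ord0 /= mul0r !addr0.
  + by rewrite G0n subr0 addr0.
  + rewrite /Sgen /= /lift1 /fC /= /sw G0n subrr add0r.
    by rewrite !big_ord_recl big_ord0 /= !mul0r !addr0.
  + rewrite /Sgen /= /lift1 /fC /= G0n subrr add0r.
    by rewrite !big_ord_recl big_ord0 /= !mul0r !addr0.
  + by rewrite Gm0 subr0 addr0.
  + rewrite /Sgen /= /lift1 /fC /= /sw subrr add0r big1 // => i _.
    by case: ifP; rewrite ?mul0r // G0n mul0r.
  + rewrite /Sgen /= sum_shift2 /lift1 /fC /= subr0 /Gtil /g2 /sw G0n mulr0 addr0.
    congr (_ + _); apply: eq_bigr => j _ /=.
    by rewrite addn2 (_ : (m.+1 - j - 1 = m - j)%N) //; lia.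
have E1 : (Sgen G : R2) * (Ly - Lx) * (x * y) =
    (x * Ly - y * Lx) * (- (y * Lx) - x * Ly - x * y).
  transitivity ((Ly - Lx) * (x * (y * (Sgen G : R2)))); first ring.
  rewrite KEY.
  transitivity (x * ((Ly - Lx) * G) - x * y * (Ly - Lx) * lift1 (sw G 1%N)
     + y * lift1 g2 * ((Ly - Lx) * sw G)
     - x * y * lift1 g2 * (Ly - Lx) * fC (sw G 1%N)); first ring.
  rewrite hG' hGs hG1 hH1.
  transitivity (x * (y * (Lx * Lx) - x * (Ly * Ly)) + x * y * (Ly - Lx) * Lx
     + y * (Lx * lift1 g2) * (y * Lx - x * Ly)); first ring.
  by rewrite hG2; ring.
split.
  by move=> m n; rewrite !bmulE !bsubE boppE E1.
have swN : forall A : R2, sw (- A) = - sw A by [].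
have E2 : sw (Sgen G) * (Lx - Ly) * (y * x) =
    (y * Lx - x * Ly) * (- (x * Ly) - y * Lx - y * x).
  have := congr1 sw E1; rewrite !swM !swB !swM swN !swM.
  by rewrite /Lx /Ly /x /y swLx swLy swX swY.
have D : (Ly - Lx) * ((sw (Sgen G) - (Sgen G : R2)) * (x * y)) = 0.
  transitivity (- (sw (Sgen G) * (Lx - Ly) * (y * x))
                - (Sgen G : R2) * (Ly - Lx) * (x * y)); first ring.
  by rewrite E2 E1; ring.
have hW0 : forall c : R1, (Ly - Lx) 0%N * c = 0 -> c = 0.
  by move=> c; rewrite W0; exact: canc.
have D' := fcancel0 hW0 D.
have Sym : forall m n, Sgen G n m = Sgen G m n.
  move=> m n; have := congr1 (fun f => f m.+1 n.+1) D'.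
  rewrite mulrC -mulrA xE /= yE fsubE => /eqP; rewrite subr_eq0 => /eqP.
  by [].
move=> m n hm hn.
have := Sym n.-1 m; rewrite /Sgen hm /=.
by case: n hn => [|[|n]].
Qed.
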